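(* Let $n\geq2$ be an integer, and let $f:[0,\infty)\to[0,\infty)$ be a continuous, log-concave function, $C^2$-smooth on $(0,\infty)$, with $0<\int_0^\infty f<\infty$. Then for $0\leq\varepsilon\leq1$, $$ \int_{t_n(f)(1-\varepsilon)}^{t_n(f)(1+\varepsilon)}t^{n-1}f(t)\,dt\geq\left(1-Ce^{-c\varepsilon^2n}\right)\int_0^\infty t^{n-1}f(t)\,dt, $$ where $C>1$ and $0<c<1$ are universal constants.
   Context: For such $f$ and $p>1$, $t_p(f)$ denotes the unique $t>0$ with $f(t)>0$ and $f'(t)/f(t)=-(p-1)/t$ (existence and uniqueness hold under the stated assumptions). Log-concave: $f(\lambda x+(1-\lambda)y)\geq f(x)^\lambda f(y)^{1-\lambda}$. *)

(* Defs.v *)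
From HB Require Import structures.
From mathcomp Require Import all_boot all_order all_algebra.
From mathcomp Require Import all_classical all_reals all_analysis.
Set Implicit Arguments. Unset Strict Implicit. Unset Printing Implicit Defensive.
Import Order.TTheory GRing.Theory Num.Theory.
Import numFieldNormedType.Exports.
Local Open Scope classical_set_scope.
Local Open Scope ring_scope.

Definition log_concave_on_nonneg (R : realType) (f : R -> R) : Prop :=
  forall x y l : R, 0 <= x -> 0 <= y -> 0 <= l -> l <= 1 ->
    f x `^ l * f y `^ (1 - l) <= f (l * x + (1 - l) * y).

Definition is_t_p (R : realType) (p : R) (f : R -> R) (t : R) : Prop :=
  0 < t /\ 0 < f t /\ derive1 f t / f t = - (p - 1) / t.

(* Main.v *)
Require Import Defs.
From HB Require Import structures.
From mathcomp Require Import all_boot all_order all_algebra.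
From mathcomp Require Import all_classical all_reals all_analysis.
From mathcomp Require Import ring lra.
Import Order.TTheory GRing.Theory Num.Theory.
Import numFieldNormedType.Exports.
Local Open Scope classical_set_scope.
Local Open Scope ring_scope.
Lemma dF (R : realType) (t0 x : R) : is_derive x 1 (fun y : R => (y + t0) / 2) (1/2).
Proof.
apply: is_derive_eq.
by rewrite !scaler0 add0r addr0 -[_ *: _]/(2^-1 * 1) mulr1 div1r.
Qed.

Lemma dF1 (R : realType) (t0 x : R) : derive1 (fun y : R => (y + t0) / 2) x = 1/2.
Proof. have H := @dF R t0 x. rewrite derive1E. by rewrite derive_val. Qed.

Lemma subst_half (R : realType) (g : R -> R) (t0 : R) : 0 < t0 ->
  {within `[t0 / 2, +oo[, continuous g} -> (forall x, t0 / 2 < x -> 0 <= g x) ->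
  (\int[lebesgue_measure]_(x in `[(t0 / 2)%R, +oo[) (g x)%:E =
   \int[lebesgue_measure]_(x in `[0%R, +oo[) (g ((x + t0) / 2) * (1/2))%R%:E)%E.
Proof.
move=> t0p cg g0.
set F := fun y : R => (y + t0) / 2.
have F0 : t0 / 2 = F 0 by rewrite /F add0r.
have dF' : derive1 F = cst (1/2) by apply/funext => x; exact: dF1.
rewrite F0.
rewrite (@increasing_ge0_integration_by_substitutiony R F g 0).
- apply: eq_integral => x _; congr EFin; rewrite /= dF'; done.
- move=> x y _ _ xy; rewrite /F ltr_pM2r ?invr_gt0 // ltrD2r //.
- by rewrite dF' => x _; exact: cst_continuous.
- by rewrite dF'; exact: is_cvg_cst.
- by rewrite dF'; exact: is_cvg_cst.
- split.
    by move=> x _; exact: (@dF R t0 x).(ex_derive).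
  apply: cvg_at_right_filter.
  apply: differentiable_continuous; apply/derivable1_diffP.
  exact: (@dF R t0 0).(ex_derive).
- apply/cvgryPge => A; near=> x; rewrite /F ler_pdivlMr //.
  rewrite -lerBlDr; near: x; apply: nbhs_pinfty_ge; exact: num_real.
- by rewrite -F0.
- by rewrite -F0 => x; rewrite in_itv /= andbT; exact: g0.
Unshelve. all: end_near.
Qed.
Lemma tangent (R : realType) (f : R -> R) (t0 a x : R) :
  log_concave_on_nonneg f -> derivable f t0 1 -> 0 < t0 -> 0 < f t0 ->
  derive1 f t0 = - a / t0 * f t0 -> 0 <= x -> 0 < f x ->
  ln (f x) <= ln (f t0) - a * (x - t0) / t0.
Proof.
move=> lc df t0p ft0p fd x0 fxp.
set h := x - t0. set D := ln (f x) - ln (f t0).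
have key : forall l, 0 < l -> l <= 1 -> f t0 * D <= l^-1 * (f (l * h + t0) - f t0).
  move=> l l0 l1.
  have := lc x t0 l x0 (ltW t0p) (ltW l0) l1.
  rewrite (_ : l * x + (1 - l) * t0 = l * h + t0); last by rewrite /h; ring.
  rewrite /powR !gt_eqF // -expRD.
  rewrite (_ : l * ln (f x) + (1 - l) * ln (f t0) = l * D + ln (f t0)); last by rewrite /D; ring.
  rewrite expRD lnK ?posrE // => H.
  have H2 := expR_ge1Dx (l * D).
  have H3 : f t0 * (1 + l * D) <= f (l * h + t0).
    by apply: le_trans H; rewrite [X in _ <= X]mulrC; apply: ler_wpM2l => //; exact: ltW.
  rewrite ler_pdivlMl //.
  by rewrite mulrDr mulr1 in H3; rewrite lerBrDl mulrA (mulrC l); lra.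
have dh : derivable f t0 h by apply: diff_derivable; apply/derivable1_diffP.
have Dh : 'D_h f t0 = h * derive1 f t0.
  rewrite derive1E !deriveE; try exact/derivable1_diffP.
  by rewrite -{1}[h]mulr1 -[h * 1]/(h *: 1) linearZ.
have cv : (fun l => l^-1 *: ((f \o shift t0) (l *: h) - f t0)) @ 0^'+ --> 'D_h f t0.
  apply: cvg_trans; last exact: dh.
  apply: cvg_app; apply: within_subset => u /= u0; exact: lt0r_neq0.
have : f t0 * D <= 'D_h f t0.
  rewrite -(cvg_lim _ cv) //; apply: limr_ge; first by apply/cvg_ex; eexists; exact: cv.
  near=> l; rewrite /= [l *: h]/(l * h); apply: key.
    by near: l; exact: nbhs_right_gt.
  by apply: ltW; near: l; apply: nbhs_right_lt; exact: ltr01.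
rewrite Dh fd => H.
have : D <= - a * h / t0.
  have E : h * (- a / t0 * f t0) = f t0 * (- a * h / t0) by ring.
  by rewrite E ler_pM2l in H.
rewrite !mulNr => H'; rewrite /D in H'; lra.
Unshelve. all: end_near.
Qed.

Lemma tangent_exp (R : realType) (f : R -> R) (t0 a x : R) :
  (forall x, 0 <= x -> 0 <= f x) ->
  log_concave_on_nonneg f -> derivable f t0 1 -> 0 < t0 -> 0 < f t0 ->
  derive1 f t0 = - a / t0 * f t0 -> 0 <= x ->
  f x <= f t0 * expR (- (a * (x - t0) / t0)).
Proof.
move=> f0 lc df t0p ft0p fd x0.
have := f0 x x0; rewrite le_eqVlt => /orP[/eqP <-|fxp].
  by apply: mulr_ge0; [exact: ltW|exact: expR_ge0].
have H := @tangent R f t0 a x lc df t0p ft0p fd x0 fxp.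
rewrite -(lnK fxp) -(lnK ft0p) -expRD ler_expR; lra.
Qed.

Lemma midpoint_bound (R : realType) (f : R -> R) (t0 a x : R) :
  (forall x, 0 <= x -> 0 <= f x) ->
  log_concave_on_nonneg f -> derivable f t0 1 -> 0 < t0 -> 0 < f t0 ->
  derive1 f t0 = - a / t0 * f t0 -> 0 <= x ->
  f x <= f ((x + t0) / 2) * expR (- (a * (x - t0) / t0) / 2).
Proof.
move=> f0 lc df t0p ft0p fd x0.
have m0 : 0 <= (x + t0) / 2 by apply: divr_ge0 => //; apply: addr_ge0 => //; exact: ltW.
have := f0 x x0; rewrite le_eqVlt => /orP[/eqP <-|fxp].
  by apply: mulr_ge0; [exact: f0|exact: expR_ge0].
have H := @tangent R f t0 a x lc df t0p ft0p fd x0 fxp.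
have h12 : (0:R) <= 1/2 by lra.
have h12' : (1/2:R) <= 1 by lra.
have := lc x t0 (1/2) x0 (ltW t0p) h12 h12'.
rewrite (_ : 1 / 2 * x + (1 - 1 / 2) * t0 = (x + t0) / 2); last by field.
rewrite /powR !gt_eqF // -expRD => L.
apply: le_trans (_ : expR (1 / 2 * ln (f x) + (1 - 1 / 2) * ln (f t0)) *
   expR (- (a * (x - t0) / t0) / 2) <= _); last first.
  by apply: ler_wpM2r => //; exact: expR_ge0.
rewrite -expRD -{1}(lnK fxp) ler_expR.
lra.
Qed.

Lemma factor_r (R : realType) (r d : R) :
  -1 <= r -> 0 <= d -> 16 * d <= r ^+ 2 -> 16 * d <= 1 ->
  2 * (1 + r) <= (2 + r) * expR (r / 2 - d).
Proof.
move=> r1 d0 dr d1.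
have [rp|rn] := leP 0 r.
  have e1 := expR_ge1Dx ((r / 2 - d) / 2).
  have E : expR (r / 2 - d) = expR ((r / 2 - d) / 2) ^+ 2.
    by rewrite expr2 -expRD; congr expR; field.
  rewrite E.
  have p0 : 0 <= 1 + (r / 2 - d) / 2 by lra.
  have : (1 + (r / 2 - d) / 2) ^+ 2 <= expR ((r / 2 - d) / 2) ^+ 2.
    by rewrite ler_pXn2r // ?nnegrE // expR_ge0.
  have dr' : d <= r / 16.
    have [r1'|r1'] := leP r 1; last by lra.
    nra.
  move=> H; apply: le_trans (_ : (2 + r) * (1 + (r / 2 - d) / 2) ^+ 2 <= _); last first.
    by apply: ler_wpM2l => //; lra.
  rewrite expr2; nra.
have e1 := expR_ge1Dx (r / 2 - d).
apply: le_trans (_ : (2 + r) * (1 + (r / 2 - d)) <= _); last first.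
  by apply: ler_wpM2l => //; lra.
rewrite expr2 in dr; nra.
Qed.

Lemma g_bound (R : realType) (f : R -> R) (t0 : R) (n : nat) (eps x : R) :
  (forall x, 0 <= x -> 0 <= f x) ->
  log_concave_on_nonneg f -> derivable f t0 1 -> 0 < t0 -> 0 < f t0 ->
  derive1 f t0 = - (n.-1)%:R / t0 * f t0 -> 0 <= eps -> eps <= 1 -> 0 <= x ->
  (x < t0 * (1 - eps)) \/ (t0 * (1 + eps) < x) ->
  x ^+ n.-1 * f x <= expR (- (eps ^+ 2 / 16)) ^+ n.-1 *
     (((x + t0) / 2) ^+ n.-1 * f ((x + t0) / 2)).
Proof.
move=> f0 lc df t0p ft0p fd e0 e1 x0 out.
set m := (x + t0) / 2.
have m0 : 0 <= m by rewrite /m; apply: divr_ge0 => //; apply: addr_ge0 => //; exact: ltW.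
have mid := @midpoint_bound R f t0 (n.-1)%:R x f0 lc df t0p ft0p fd x0.
set r := (x - t0) / t0.
have xr : x = t0 * (1 + r) by rewrite /r; field; rewrite gt_eqF.
have mr : m = t0 * (2 + r) / 2 by rewrite /m /r; field; rewrite gt_eqF.
set E1 := expR (- (r / 2)).
have E1p : 0 < E1 by exact: expR_gt0.
have hE : expR (- ((n.-1)%:R * (x - t0) / t0) / 2) = E1 ^+ n.-1.
  by rewrite /E1 -expRM_natl; congr expR; rewrite /r; field; rewrite gt_eqF.
rewrite hE in mid.
set d := eps ^+ 2 / 16.
have r1 : -1 <= r.
  rewrite /r ler_pdivlMr // mulN1r; lra.
have d0 : 0 <= d by rewrite /d; apply: divr_ge0 => //; exact: sqr_ge0.
have dr : 16 * d <= r ^+ 2.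
  rewrite /d mulrC divfK; last by [].
  have : eps < `|r|.
    rewrite /r normrM normfV (gtr0_norm t0p) ltr_pdivlMr //.
    case: out => H.
      rewrite ltr0_norm; last by nra.
      nra.
    rewrite gtr0_norm; last by nra.
    nra.
  move=> H; rewrite -(real_normK (num_real r)); have := normr_ge0 r; nra.
have d1 : 16 * d <= 1.
  rewrite /d mulrC divfK; last by [].
  by rewrite expr_le1.
have F := @factor_r R r d r1 d0 dr d1.
have key : x * E1 <= expR (- d) * m.
  rewrite xr mr /E1.
  have t2 : 0 <= t0 / 2 * expR (- (r / 2)) by apply: mulr_ge0; [lra|exact: expR_ge0].
  have := ler_wpM2l t2 F.
  have e : expR (- d) = expR (r / 2 - d) * expR (- (r / 2)) by rewrite -expRD; congr expR; ring.
  rewrite e => H; apply: le_trans (_ : t0 / 2 * expR (- (r / 2)) * (2 * (1 + r)) <= _).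
    by rewrite le_eqVlt; apply/orP; left; apply/eqP; field.
  by apply: (le_trans H); rewrite le_eqVlt; apply/orP; left; apply/eqP; field.
apply: le_trans (_ : x ^+ n.-1 * (f m * E1 ^+ n.-1) <= _).
  by apply: ler_wpM2l => //; exact: exprn_ge0.
rewrite mulrA (mulrC _ (f m)) -mulrA -exprMn.
apply: le_trans (_ : f m * (expR (- d) * m) ^+ n.-1 <= _).
  apply: ler_wpM2l; first exact: f0.
  have [->|np] := posnP n.-1; first by rewrite !expr0.
  rewrite ler_pXn2r // nnegrE.
    by apply: mulr_ge0 => //; exact: ltW.
  by apply: mulr_ge0 => //; exact: expR_ge0.
by rewrite exprMn mulrC mulrA.
Qed.

Lemma meas_g (R : realType) (f : R -> R) (k : nat) :
  {within `[0%R, +oo[, continuous f} ->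
  measurable_fun (`[0%R, +oo[%classic : set R) (fun x : R => x ^+ k * f x).
Proof.
move=> cf.
apply: measurable_realfun.measurable_funM.
  apply: measurable_funTS; apply: measurable_realfun.continuous_measurable_fun; exact: exprn_continuous.
by apply: measurable_realfun.subspace_continuous_measurable_fun => //.
Qed.

Lemma s_le_exp (R : realType) (s : R) : 0 <= s -> s <= expR (s / 2).
Proof.
move=> s0.
have e := expR_ge1Dx (s / 4).
have E : expR (s / 2) = expR (s / 4) ^+ 2 by rewrite expr2 -expRD; congr expR; field.
rewrite E.
apply: le_trans (_ : (1 + s / 4) ^+ 2 <= _).
  have h := sqr_ge0 (1 - s / 4); rewrite expr2 in h; rewrite expr2; nra.
by rewrite ler_pXn2r // nnegrE ?expR_ge0 //; lra.
Qed.

Lemma finite_moment (R : realType) (f : R -> R) (t0 : R) (n : nat) :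
  (forall x, 0 <= x -> 0 <= f x) -> {within `[0%R, +oo[, continuous f} ->
  log_concave_on_nonneg f -> derivable f t0 1 -> 0 < t0 -> 0 < f t0 ->
  derive1 f t0 = - (n.-1)%:R / t0 * f t0 -> (0 < n.-1)%N ->
  (\int[lebesgue_measure]_(x in `[0%R, +oo[) (x ^+ n.-1 * f x)%:E < +oo)%E.
Proof.
move=> f0 cf lc df t0p ft0p fd n1.
set rate := (2 * t0)^-1.
have rp : 0 < rate by rewrite /rate invr_gt0; lra.
set K := f t0 * t0 ^+ n.-1 * expR 1 / rate.
have Kp : 0 <= K.
  rewrite /K; apply: divr_ge0; last exact: ltW.
  apply: mulr_ge0; last exact: expR_ge0.
  by apply: mulr_ge0; [exact: ltW|apply: exprn_ge0; exact: ltW].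
have pw : forall x, 0 <= x -> x ^+ n.-1 * f x <= K * exponential_pdf rate x.
  move=> x x0.
  rewrite exponential_pdfE //.
  have T := @tangent_exp R f t0 (n.-1)%:R x f0 lc df t0p ft0p fd x0.
  set s := x / t0.
  have s0 : 0 <= s by rewrite /s; apply: divr_ge0 => //; exact: ltW.
  have xs : x = t0 * s by rewrite /s; field; rewrite gt_eqF.
  set P := s * expR (1 - s).
  have P0 : 0 <= P by rewrite /P; apply: mulr_ge0 => //; exact: expR_ge0.
  have P1 : P <= 1.
    have e1 := expR_ge1Dx (s - 1).
    have e2 : expR (1 - s) * expR (s - 1) = 1 by rewrite -expRD (_ : 1 - s + (s - 1) = 0) ?expR0 //; ring.
    have e3 := expR_gt0 (1 - s).
    rewrite /P; nra.
  have E : expR (- ((n.-1)%:R * (x - t0) / t0)) = expR (1 - s) ^+ n.-1.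
    by rewrite -expRM_natl; congr expR; rewrite /s; field; rewrite gt_eqF.
  rewrite E in T.
  apply: le_trans (_ : x ^+ n.-1 * (f t0 * expR (1 - s) ^+ n.-1) <= _).
    by apply: ler_wpM2l => //; exact: exprn_ge0.
  have eq1 : x ^+ n.-1 * (f t0 * expR (1 - s) ^+ n.-1) = f t0 * t0 ^+ n.-1 * P ^+ n.-1.
    by rewrite {1}xs /P !exprMn; ring.
  rewrite eq1.
  apply: le_trans (_ : f t0 * t0 ^+ n.-1 * P <= _).
    apply: ler_wpM2l; first by apply: mulr_ge0; [exact: ltW|apply: exprn_ge0; exact: ltW].
    exact: ler_iXnr.
  have PP : P <= expR 1 * expR (- (rate * x)).
    rewrite /P; apply: le_trans (_ : expR (s/2) * expR (1 - s) <= _).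
      by apply: ler_wpM2r; [exact: expR_ge0 | exact: s_le_exp].
    rewrite -!expRD le_eqVlt; apply/orP; left; apply/eqP; congr expR.
    by rewrite /rate /s; field; rewrite gt_eqF.
  have KE : K * (rate * expR (- rate * x)) = f t0 * t0 ^+ n.-1 * (expR 1 * expR (- (rate * x))).
    by rewrite /K mulNr; field; rewrite gt_eqF.
  rewrite KE; apply: ler_wpM2l => //.
  by apply: mulr_ge0; [exact: ltW|apply: exprn_ge0; exact: ltW].
have mI : measurable (`[0%R, +oo[%classic : set R) by exact: measurable_itv.
have mg := @meas_g R f n.-1 cf.
have mp : measurable_fun (`[0%R, +oo[%classic : set R) (exponential_pdf rate).
  apply: (measurable_funS measurableT) => //; exact: measurable_exponential_pdf.
have inI : forall x, (`[0%R, +oo[%classic : set R) x -> 0 <= x.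
  by move=> x; rewrite /= in_itv /= andbT.
apply: (@le_lt_trans _ _ (\int[lebesgue_measure]_(x in `[0%R, +oo[) (K * exponential_pdf rate x)%:E)%E).
  apply: ge0_le_integral => //.
  - by move=> x /inI x0; rewrite lee_fin; apply: mulr_ge0 => //; [exact: exprn_ge0|exact: f0].
  - by apply/measurable_realfun.measurable_EFinP.
  - apply/measurable_realfun.measurable_EFinP; apply: measurable_realfun.measurable_funM => //.
  - by move=> x /inI x0; rewrite lee_fin; exact: pw.
under eq_integral do rewrite EFinM.
rewrite ge0_integralZl_EFin //; try (by move=> x _; rewrite lee_fin; apply: exponential_pdf_ge0; exact: ltW); try (by apply/measurable_realfun.measurable_EFinP).
apply: (@le_lt_trans _ _ (K%:E * \int[lebesgue_measure]_x (exponential_pdf rate x)%:E)%E).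
  apply: lee_wpmul2l; first by rewrite lee_fin.
  apply: ge0_subset_integral => //.
  - apply/measurable_realfun.measurable_EFinP; exact: measurable_exponential_pdf.
  - by move=> x _; rewrite lee_fin; apply: exponential_pdf_ge0; exact: ltW.
rewrite integral_exponential_pdf // mule1; exact: ltry.
Qed.

Lemma within_g (R : realType) (f : R -> R) (k : nat) :
  {within `[0%R, +oo[, continuous f} ->
  {within `[0%R, +oo[, continuous (fun x : R => x ^+ k * f x)}.
Proof.
move=> /continuous_within_itvcyP [c1 c2].
apply/continuous_within_itvcyP; split.
  move=> x xin; apply: cvgM; first exact: exprn_continuous.
  exact: c1.
apply: cvgM; last exact: c2.
apply: cvg_at_right_filter; exact: exprn_continuous.
Qed.

Theorem lemma4p5 (R : realType) :
  exists C c : R, 1 < C /\ 0 < c /\ c < 1 /\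
  forall (n : nat) (f : R -> R) (tn eps : R),
    (2 <= n)%N ->
    (forall x, 0 <= x -> 0 <= f x) ->
    {within `[0%R, +oo[, continuous f} ->
    log_concave_on_nonneg f ->
    (forall x, 0 < x ->
       [/\ derivable f x 1, derivable (derive1 f) x 1 & {for x, continuous (derive1 (derive1 f))}]) ->
    (0 < \int[@lebesgue_measure R]_(t in `[0%R, +oo[) (f t)%:E)%E ->
    (\int[@lebesgue_measure R]_(t in `[0%R, +oo[) (f t)%:E < +oo)%E ->
    is_t_p n%:R f tn ->
    0 <= eps -> eps <= 1 ->
    (((1 - C * expR (- c * eps ^+ 2 * n%:R))%:E *
       \int[@lebesgue_measure R]_(t in `[0%R, +oo[) (t ^+ n.-1 * f t)%:E)
     <= \int[@lebesgue_measure R]_(t in `[(tn * (1 - eps))%R, (tn * (1 + eps))%R])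
          (t ^+ n.-1 * f t)%:E)%E.
Proof.
exists 2, (1/32); split; first lra.
split; first lra.
split; first lra.
move=> n f tn eps n2 f0 cf lc hd _ _ [t0p [ft0p fdq]] e0 e1.
have [df _ _] := hd tn t0p.
have n1 : (0 < n.-1)%N by rewrite -subn1 subn_gt0.
have nE : n%:R = (n.-1)%:R + 1 :> R by rewrite natr1 prednK // (ltn_trans _ n2).
have fd : derive1 f tn = - (n.-1)%:R / tn * f tn.
  by rewrite -(divfK (lt0r_neq0 ft0p) (derive1 f tn)) fdq nE; congr (_ * _); congr (_ / _); ring.
set g := fun x : R => x ^+ n.-1 * f x.
set I := (`[0%R, +oo[%classic : set R).
set J := (`[(tn * (1 - eps))%R, (tn * (1 + eps))%R]%classic : set R).
set O := I `\` J.
have mI : measurable I by exact: measurable_itv.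
have mJ : measurable J by exact: measurable_itv.
have mO : measurable O by exact: measurableD.
have JI : J `<=` I.
  move=> x; rewrite /J /I /= !in_itv /= andbT => /andP[h _]; apply: le_trans h.
  by apply: mulr_ge0; [exact: ltW|lra].
have inI : forall x, I x -> 0 <= x by move=> x; rewrite /I /= in_itv /= andbT.
have mg : measurable_fun I g := @meas_g R f n.-1 cf.
have g0 : forall x, 0 <= x -> 0 <= g x.
  by move=> x x0; rewrite /g; apply: mulr_ge0; [exact: exprn_ge0|exact: f0].
set T := (\int[lebesgue_measure]_(x in I) (g x)%:E)%E.
set Tj := (\int[lebesgue_measure]_(x in J) (g x)%:E)%E.
set To := (\int[lebesgue_measure]_(x in O) (g x)%:E)%E.
have TE : T = (Tj + To)%E.
  rewrite /T -(setDUK JI) ge0_integral_setU //.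
  - by rewrite setDUK //; apply/measurable_realfun.measurable_EFinP.
  - by rewrite setDUK // => x /inI x0; rewrite lee_fin; exact: g0.
  - by apply/disj_setPS => x [Jx [_ nJx]].
have T0 : (0 <= T)%E by apply: integral_ge0 => x /inI x0; rewrite lee_fin; exact: g0.
have Tj0 : (0 <= Tj)%E by apply: integral_ge0 => x /JI /inI x0; rewrite lee_fin; exact: g0.
have To0 : (0 <= To)%E by apply: integral_ge0 => x [/inI x0 _]; rewrite lee_fin; exact: g0.
have Tfin : (T < +oo)%E := @finite_moment R f tn n f0 cf lc df t0p ft0p fd n1.
set m := fun x : R => (x + tn) / 2.
set k := expR (- (eps ^+ 2 / 16)) ^+ n.-1.
have k0 : 0 <= k by apply: exprn_ge0; exact: expR_ge0.
have mI0 : forall x, 0 <= x -> 0 <= m x.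
  by move=> x x0; rewrite /m; apply: divr_ge0 => //; apply: addr_ge0 => //; exact: ltW.
have cm : continuous m.
  move=> x; apply: differentiable_continuous; apply/derivable1_diffP.
  exact: (@dF R tn x).(ex_derive).
have mm : measurable_fun I (fun x => g (m x)).
  apply: (@measurable_comp _ _ _ _ _ _ I g I m) => //.
    move=> _ [x Ix <-]; rewrite /I /= in_itv /= andbT; apply: mI0; exact: inI.
  apply: measurable_funTS; exact: measurable_realfun.continuous_measurable_fun.
have OI : O `<=` I by move=> x [].
have mk : measurable_fun I (fun x => k * g (m x)).
  by apply: measurable_realfun.measurable_funM => //; exact: measurable_cst.
have S2 : (To <= \int[lebesgue_measure]_(x in O) (k * g (m x))%:E)%E.
  apply: ge0_le_integral => //.
  - by move=> x [/inI x0 _]; rewrite lee_fin; exact: g0.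
  - by apply/measurable_realfun.measurable_EFinP; exact: measurable_funS mg.
  - by apply/measurable_realfun.measurable_EFinP; exact: measurable_funS mk.
  - move=> x [/inI x0 nJ]; rewrite lee_fin.
    apply: (@g_bound R f tn n eps x f0 lc df t0p ft0p fd e0 e1 x0).
    have : ~ (tn * (1 - eps) <= x <= tn * (1 + eps)).
      by move=> h; apply: nJ; rewrite /J /= in_itv /= h.
    by move/negP; rewrite negb_and -!ltNge => /orP[h|h]; [left|right].
have S3 : (\int[lebesgue_measure]_(x in O) (k * g (m x))%:E <=
           \int[lebesgue_measure]_(x in I) (k * g (m x))%:E)%E.
  apply: ge0_subset_integral => //.
    by apply/measurable_realfun.measurable_EFinP.
  move=> x /inI x0; rewrite lee_fin; apply: mulr_ge0 => //; apply: g0; exact: mI0.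
have cg : {within `[(tn / 2)%R, +oo[, continuous g}.
  apply: (continuous_subspaceW _ (@within_g R f n.-1 cf)).
  move=> x; rewrite /= !in_itv /= !andbT; apply: le_trans.
  by apply: divr_ge0 => //; exact: ltW.
have SU := @subst_half R g tn t0p cg (fun x h => g0 x (le_trans (divr_ge0 (ltW t0p) (ler0n _ 2)) (ltW h))).
have S4 : (\int[lebesgue_measure]_(x in I) (k * g (m x))%:E =
           (2 * k)%:E * \int[lebesgue_measure]_(x in `[(tn / 2)%R, +oo[) (g x)%:E)%E.
  rewrite SU -ge0_integralZl_EFin //.
  - by apply: eq_integral => x _; congr EFin; rewrite /m; field.
  - move=> x /inI x0; rewrite lee_fin; apply: mulr_ge0; last lra.
    apply: g0; exact: mI0.
  - apply/measurable_realfun.measurable_EFinP; apply: measurable_realfun.measurable_funM => //.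
  - lra.
have S5 : (\int[lebesgue_measure]_(x in `[(tn / 2)%R, +oo[) (g x)%:E <= T)%E.
  apply: ge0_subset_integral => //.
  - by apply/measurable_realfun.measurable_EFinP.
  - by move=> x /inI x0; rewrite lee_fin; exact: g0.
  - move=> x; rewrite /I /= !in_itv /= !andbT; apply: le_trans.
    by apply: divr_ge0 => //; exact: ltW.
have Tob : (To <= (2 * k)%:E * T)%E.
  apply: (le_trans S2); apply: (le_trans S3); rewrite S4.
  by apply: lee_wpmul2l => //; rewrite lee_fin; lra.
set E := expR (- (1 / 32) * eps ^+ 2 * n%:R).
have kE : 2 * k <= 2 * E.
  rewrite ler_pM2l // /k /E -expRM_natl ler_expR nE.
  have a1 : 1 <= (n.-1)%:R :> R by rewrite ler1n.
  have q0 : 0 <= eps ^+ 2 by exact: sqr_ge0.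
  nra.
have Tjfin : Tj \is a fin_num.
  by rewrite ge0_fin_numE //; apply: le_lt_trans Tfin; rewrite TE; exact: leeDl.
have Tofin : To \is a fin_num.
  by rewrite ge0_fin_numE //; apply: le_lt_trans Tfin; rewrite TE; exact: leeDr.
rewrite TE in Tob *.
have j0 : 0 <= fine Tj by exact: fine_ge0.
have o0 : 0 <= fine To by exact: fine_ge0.
move: Tob; rewrite -(fineK Tjfin) -(fineK Tofin) -!EFinD -!EFinM !lee_fin.
set j := fine Tj; set o := fine To => Tob.
have h2 : 0 <= (2 * E - 2 * k) * (j + o) by apply: mulr_ge0; [lra | exact: addr_ge0].
nra.
Qed.
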